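(* Let $\Sigma \rightarrow G$ be a twist, where $G$ is a locally compact Hausdorff étale groupoid, and let $L \colon G \rightarrow [0,\infty)$ be a continuous length function on $G$. Let $p\in\mathbb{Z}_+$. If $f \in H^{2,L,p}(\Sigma; G)$ has open support $U \subseteq G$, then $f$ lies in the closure of $C_c(\Sigma|_U;U)$ with respect to $\|\cdot\|_{2,p,L}$. In particular, if $f \in H^{2,L}(\Sigma; G)$ has open support $U \subseteq G$, then $f \in H^{2,L}(\Sigma|_U;U)$.
   Context: A twist $\Sigma\rightarrow G$ is a locally trivial central extension $\mathbb{T}\times G^{(0)}\to\Sigma\to G$; it determines a line bundle over $G$ whose fibres carry an absolute value. $C_c(\Sigma;G)$ is the space of continuous compactly supported sections of this bundle, $C_0(\Sigma;G)$ the continuous sections vanishing at infinity, and for $U\subseteq G$, $C_c(\Sigma|_U;U)$ (resp. $C_0(\Sigma|_U;U)$) the sections supported in $U$. The support of a section $f$ is $\operatorname{supp}(f)=\{\gamma: f(\gamma)\ne0\}$. A length function is $L\colon G\to[0,\infty)$ with $L|_{G^{(0)}}=0$, $L(\gamma)=L(\gamma^{-1})$, and $L(\gamma_1\gamma_2)\le L(\gamma_1)+L(\gamma_2)$ for composable pairs. For $p\in\mathbb{Z}_+$ and $f\in C_c(\Sigma;G)$ set $\|f\|_{2,p,L}=\max\{\sup_{x}(\sum_{\gamma\in G_x}|f(\gamma)|^2(1+L(\gamma))^{2p})^{1/2},\ \sup_x(\sum_{\gamma\in G^x}|f(\gamma)|^2(1+L(\gamma))^{2p})^{1/2}\}$,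 where $G_x=s^{-1}(x)$, $G^x=r^{-1}(x)$. $H^{2,L,p}(\Sigma;G)$ is the completion of $C_c(\Sigma;G)$ in $\|\cdot\|_{2,p,L}$ (viewed as sections), and the Schwartz space is $H^{2,L}(\Sigma;G)=\bigcap_{p\in\mathbb{Z}_+}H^{2,L,p}(\Sigma;G)\cap C_0(\Sigma;G)$. For $U\subseteq G$, $H^{2,L}(\Sigma|_U;U)=\bigcap_{p\ge1}\overline{C_c(\Sigma|_U;U)}^{\|\cdot\|_{2,p,L}}\cap C_0(\Sigma|_U;U)$. *)

(* Defs.v *)
From HB Require Import structures.
From mathcomp Require Import all_boot all_order all_algebra.
From mathcomp Require Import all_classical all_reals all_analysis.
From mathcomp Require Import complex.
Set Implicit Arguments.
Unset Strict Implicit.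
Unset Printing Implicit Defensive.
Import Order.TTheory GRing.Theory Num.Theory.
Import numFieldNormedType.Exports.
Local Open Scope ring_scope.
Local Open Scope classical_set_scope.

Definition CC (R : realType) : numClosedFieldType := R[i].
HB.instance Definition _ (R : realType) :=
  PseudoPointedMetric.copy (CC R) (CC R)^o.

Definition cabs (R : realType) (z : CC R) : R := Normc.normc (z : R[i]).

Definition circle (R : realType) : set (CC R) := [set z | `|z| = 1].

(** groupoid data on a carrier T: unit space, source, range, (partial)
    multiplication (g h is meaningful when src g = rng h), inverse. *)
Record gpd (T : Type) := Gpd {
  g_unit : set T;
  g_src : T -> T;
  g_rng : T -> T;
  g_mul : T -> T -> T;
  g_inv : T -> T }.

Definition composable (T : Type) (G : gpd T) (g h : T) : Prop :=
  g_src G g = g_rng G h.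

Record is_groupoid (T : Type) (G : gpd T) : Prop := {
  gp_src_unit : forall g, g_unit G (g_src G g);
  gp_rng_unit : forall g, g_unit G (g_rng G g);
  gp_unit_src : forall x, g_unit G x -> g_src G x = x;
  gp_unit_rng : forall x, g_unit G x -> g_rng G x = x;
  gp_src_mul : forall g h, composable G g h -> g_src G (g_mul G g h) = g_src G h;
  gp_rng_mul : forall g h, composable G g h -> g_rng G (g_mul G g h) = g_rng G g;
  gp_mulA : forall g h k, composable G g h -> composable G h k ->
      g_mul G (g_mul G g h) k = g_mul G g (g_mul G h k);
  gp_mulg1 : forall g, g_mul G g (g_src G g) = g;
  gp_mul1g : forall g, g_mul G (g_rng G g) g = g;
  gp_src_inv : forall g, g_src G (g_inv G g) = g_rng G g;
  gp_rng_inv : forall g, g_rng G (g_inv G g) = g_src G g;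
  gp_mulgV : forall g, g_mul G g (g_inv G g) = g_rng G g;
  gp_mulVg : forall g, g_mul G (g_inv G g) g = g_src G g }.

Record is_top_groupoid (T : topologicalType) (G : gpd T) : Prop := {
  tg_groupoid : is_groupoid G;
  tg_mul_cont : {within [set p : T * T | composable G p.1 p.2],
                  continuous (fun p => g_mul G p.1 p.2)};
  tg_inv_cont : continuous (g_inv G) }.

Definition local_homeo (T U : topologicalType) (f : T -> U) : Prop :=
  forall g, exists V : set T,
    [/\ open V, V g, {in V &, injective f}, {within V, continuous f} &
        forall W, open W -> W `<=` V -> open (f @` W)].

Definition lch_etale_groupoid (T : topologicalType) (G : gpd T) : Prop :=
  [/\ is_top_groupoid G, hausdorff_space T, locally_compact [set: T]
    & local_homeo (g_rng G)].

(** A twist  T x G0 --iota--> Sigma --pi--> G.  [iota z x] is the image of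
    (z, x) for z in the circle and x in the unit space of G. *)
Record is_twist (R : realType) (G S : topologicalType) (GG : gpd G)
    (SS : gpd S) (pi : S -> G) (iota : CC R -> G -> S) : Prop := {
  tw_top : is_top_groupoid SS;
  tw_pi_cont : continuous pi;
  tw_pi_open : forall W, open W -> open (pi @` W);
  tw_pi_surj : forall g, exists s, pi s = g;
  tw_pi_mul : forall s t, composable SS s t ->
      pi (g_mul SS s t) = g_mul GG (pi s) (pi t);
  tw_pi_src : forall s, pi (g_src SS s) = g_src GG (pi s);
  tw_pi_rng : forall s, pi (g_rng SS s) = g_rng GG (pi s);
  tw_pi_unit : pi @` g_unit SS = g_unit GG;
  tw_pi_unit_inj : {in g_unit SS &, injective pi};
  (* iota : T x G0 -> Sigma is a groupoid homomorphism from the trivial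
     group bundle, which is a homeomorphism onto pi^-1(G0) *)
  tw_iota_unit : forall x, g_unit GG x -> g_unit SS (iota 1 x);
  tw_iota_src : forall z x, circle z -> g_unit GG x ->
      g_src SS (iota z x) = iota 1 x;
  tw_iota_rng : forall z x, circle z -> g_unit GG x ->
      g_rng SS (iota z x) = iota 1 x;
  tw_iota_mul : forall z w x, circle z -> circle w -> g_unit GG x ->
      iota (z * w) x = g_mul SS (iota z x) (iota w x);
  tw_iota_inj : forall z w x y, circle z -> circle w -> g_unit GG x ->
      g_unit GG y -> iota z x = iota w y -> z = w /\ x = y;
  tw_iota_cont : {within [set p : CC R * G | circle p.1 /\ g_unit GG p.2],
                   continuous (fun p => iota p.1 p.2)};
  tw_iota_embed : forall B : set (CC R * G), open B ->
      exists O : set S, open O /\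
        (fun p => iota p.1 p.2) @` (B `&` [set p | circle p.1 /\ g_unit GG p.2])
        = O `&` (fun p => iota p.1 p.2) @` [set p | circle p.1 /\ g_unit GG p.2];
  tw_exact : forall s, g_unit GG (pi s) <->
      exists z x, [/\ circle z, g_unit GG x & s = iota z x];
  tw_central : forall z s, circle z ->
      g_mul SS (iota z (g_rng GG (pi s))) s = g_mul SS s (iota z (g_src GG (pi s)));
  tw_loc_triv : forall g, exists (U : set G) (sec : G -> S) (zeta : S -> CC R),
      [/\ open U /\ U g, {within U, continuous sec},
          forall h, U h -> pi (sec h) = h,
          {within pi @^-1` U, continuous zeta} &
          forall s, U (pi s) -> circle (zeta s) /\
             s = g_mul SS (iota (zeta s) (g_rng GG (pi s))) (sec (pi s))] }.

Definition length_function (R : realType) (G : topologicalType) (GG : gpd G)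
    (L : G -> R) : Prop :=
  [/\ forall g, 0 <= L g,
      forall x, g_unit GG x -> L x = 0,
      forall g, L g = L (g_inv GG g) &
      forall g h, composable GG g h -> L (g_mul GG g h) <= L g + L h].

(** Sections of the line bundle of Sigma -> G are identified with the
    T-equivariant functions f : Sigma -> C, f(z.s) = conj(z) f(s). *)
Definition is_section (R : realType) (G S : topologicalType) (GG : gpd G)
    (SS : gpd S) (pi : S -> G) (iota : CC R -> G -> S) (f : S -> CC R) : Prop :=
  forall z s, circle z -> f (g_mul SS (iota z (g_rng GG (pi s))) s) = z^* * f s.

(** the absolute value |f(g)| of a section at g in G (all lifts give the
    same value for a section) *)
Definition sabs (R : realType) (G S : topologicalType) (pi : S -> G)
    (f : S -> CC R) (g : G) : R :=
  sup [set r | exists s, pi s = g /\ r = cabs (f s)].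

Definition supp (R : realType) (G S : topologicalType) (pi : S -> G)
    (f : S -> CC R) : set G :=
  [set g | exists s, pi s = g /\ f s != 0].

(** C_c(Sigma|_U; U) (sections supported in U, extended by zero);
    C_c(Sigma; G) is the case U = setT *)
Definition Cc_on (R : realType) (G S : topologicalType) (GG : gpd G)
    (SS : gpd S) (pi : S -> G) (iota : CC R -> G -> S) (U : set G)
    (f : S -> CC R) : Prop :=
  [/\ is_section GG SS pi iota f, continuous f &
      exists K : set G, [/\ compact K, K `<=` U &
                            forall s, ~ K (pi s) -> f s = 0]].

(** C_0(Sigma|_U; U) (sections on U vanishing at infinity on U, extended
    by zero); C_0(Sigma; G) is the case U = setT *)
Definition C0_on (R : realType) (G S : topologicalType) (GG : gpd G)
    (SS : gpd S) (pi : S -> G) (iota : CC R -> G -> S) (U : set G)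
    (f : S -> CC R) : Prop :=
  [/\ is_section GG SS pi iota f,
      forall s, ~ U (pi s) -> f s = 0,
      {within pi @^-1` U, continuous f} &
      forall e : R, 0 < e -> exists K : set G, [/\ compact K, K `<=` U &
                            forall s, ~ K (pi s) -> cabs (f s) < e]].

Definition norm2pL (R : realType) (G S : topologicalType) (GG : gpd G)
    (pi : S -> G) (L : G -> R) (p : nat) (f : S -> CC R) : \bar R :=
  maxe
   (ereal_sup [set sqrte (\esum_(g in [set g | g_src GG g = x])
                 ((sabs pi f g) ^+ 2 * (1 + L g) ^+ (2 * p))%:E)
               | x in g_unit GG])
   (ereal_sup [set sqrte (\esum_(g in [set g | g_rng GG g = x])
                 ((sabs pi f g) ^+ 2 * (1 + L g) ^+ (2 * p))%:E)
               | x in g_unit GG]).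

Definition in_closure_Cc (R : realType) (G S : topologicalType) (GG : gpd G)
    (SS : gpd S) (pi : S -> G) (iota : CC R -> G -> S) (L : G -> R) (p : nat)
    (U : set G) (f : S -> CC R) : Prop :=
  forall e : R, 0 < e -> exists h, Cc_on GG SS pi iota U h /\
    (norm2pL GG pi L p (fun s => (f s - h s)%R) < e%:E)%E.

Definition H2Lp (R : realType) (G S : topologicalType) (GG : gpd G)
    (SS : gpd S) (pi : S -> G) (iota : CC R -> G -> S) (L : G -> R) (p : nat)
    (f : S -> CC R) : Prop :=
  is_section GG SS pi iota f /\ in_closure_Cc GG SS pi iota L p setT f.

(** H^{2,L}(Sigma|_U; U) (U = setT gives the Schwartz space H^{2,L}(Sigma;G)) *)
Definition H2L_on (R : realType) (G S : topologicalType) (GG : gpd G)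
    (SS : gpd S) (pi : S -> G) (iota : CC R -> G -> S) (L : G -> R)
    (U : set G) (f : S -> CC R) : Prop :=
  (forall p : nat, (0 < p)%N -> in_closure_Cc GG SS pi iota L p U f) /\
  C0_on GG SS pi iota U f.

(* Main.v *)
Require Import Defs.
From HB Require Import structures.
From mathcomp Require Import all_boot all_order all_algebra.
From mathcomp Require Import all_classical all_reals all_analysis.
From mathcomp Require Import complex.
From mathcomp Require Import ring lra.
Import Order.TTheory GRing.Theory Num.Theory.
Import numFieldNormedType.Exports.
Local Open Scope ring_scope.
Local Open Scope classical_set_scope.
Lemma normcC (R : realType) (z : CC R) : `|z| = ((cabs z)%:C)%C.
Proof. rewrite normc_def /cabs /Normc.normc. by case: z. Qed.

Lemma cabs_ge0 (R : realType) (z : CC R) : 0 <= cabs z.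
Proof. by rewrite /cabs /Normc.normc; case: z => a b; apply: sqrtr_ge0. Qed.

Lemma cabsM (R : realType) (z w : CC R) : cabs (z * w) = cabs z * cabs w.
Proof. exact: Normc.normcM. Qed.

Lemma cabsD (R : realType) (z w : CC R) : cabs (z + w) <= cabs z + cabs w.
Proof. exact: le_normcD. Qed.

Lemma cabsN (R : realType) (z : CC R) : cabs (- z) = cabs z.
Proof. exact: normcN. Qed.

Lemma cabs0 (R : realType) : cabs (0 : CC R) = 0.
Proof. exact: Normc.normc0. Qed.

Lemma cabs_eq0 (R : realType) (z : CC R) : cabs z = 0 -> z = 0.
Proof. exact: Normc.eq0_normc. Qed.

Lemma cabs_conj (R : realType) (z : CC R) : cabs z^* = cabs z.
Proof.
have := normcJ z. rewrite !normcC. by case.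
Qed.

Lemma cabs_real (R : realType) (r : R) : cabs ((r%:C)%C : CC R) = `|r|.
Proof.
rewrite /cabs /Normc.normc /=. by rewrite expr0n /= addr0 sqrtr_sqr.
Qed.

Lemma circle_cabs (R : realType) (z : CC R) : circle z -> cabs z = 1.
Proof. by rewrite /circle /= normcC; case. Qed.

Lemma cabs_conjM (R : realType) (z w : CC R) : circle z -> cabs (z^* * w) = cabs w.
Proof. by move=> /circle_cabs cz; rewrite cabsM cabs_conj cz mul1r. Qed.

Lemma cont_eps (R : realType) (S : topologicalType) (f : S -> CC R) s0 :
  (forall e : R, 0 < e -> \forall s \near s0, cabs (f s0 - f s) < e) -> {for s0, continuous f}.
Proof.
move=> H. apply/cvgrPdist_lt => e.
case: e => a b. rewrite ltcE /= => /andP[/eqP b0 a0]. subst b.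
near=> s. rewrite normcC ltcR. near: s. exact: H.
Unshelve. all: by end_near.
Qed.

Lemma eps_cont (R : realType) (S : topologicalType) (f : S -> CC R) s0 :
  {for s0, continuous f} -> forall e : R, 0 < e -> \forall s \near s0, cabs (f s0 - f s) < e.
Proof.
move=> /cvgrPdist_lt H e e0.
have : 0 < ((e%:C)%C : CC R) by rewrite ltcR.
move=> /H. apply: filterS => s. by rewrite normcC ltcR.
Qed.
Arguments cabs_ge0 {R}.
Arguments cabsM {R}.
Arguments cabsD {R}.
Arguments cabsN {R}.
Arguments cabs_eq0 {R}.
Arguments cabs_conj {R}.
Arguments cabs_real {R}.
Arguments cabs_conjM {R}.
Arguments circle_cabs {R}.
Arguments eps_cont {R S f s0}.
Arguments cont_eps {R S f s0}.
Definition clamp01 {R : realType} (x : R) : R := Num.min 1 (Num.max 0 x).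
Ltac clampcase x := rewrite /clamp01; case: (leP 0 x) => ?; [case: (leP 1 x) => ? | case: (leP (1:_) 0) => ?].
Lemma clamp01_ge0 {R : realType} (x : R) : 0 <= clamp01 x.
Proof. clampcase x; lra. Qed.
Lemma clamp01_le1 {R : realType} (x : R) : clamp01 x <= 1.
Proof. clampcase x; lra. Qed.
Lemma clamp01_le0 {R : realType} (x : R) : x <= 0 -> clamp01 x = 0.
Proof. move=> H; clampcase x; lra. Qed.
Lemma clamp01_lt1 {R : realType} (x : R) : clamp01 x < 1 -> x < 1.
Proof. clampcase x; lra. Qed.
Lemma clamp01_lip {R : realType} (x y : R) : `|clamp01 x - clamp01 y| <= `|x - y|.
Proof.
have H1 := ler_norm (x - y).
have H2 : -(x - y) <= `|x - y| by rewrite -normrN ler_norm.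
clampcase x; clampcase y; rewrite ler_norml; apply/andP; split; lra.
Qed.

Lemma esumZ_le {R : realType} (T : choiceType) (I : set T) (a : T -> \bar R) (c : R) :
  0 <= c -> (forall i, (0 <= a i)%E) ->
  (\esum_(i in I) (c%:E * a i) <= c%:E * \esum_(i in I) a i)%E.
Proof.
move=> c0 a0. apply: ge_ereal_sup => _ [X [finX XI] <-].
rewrite -ge0_mule_fsumr //. apply: lee_wpmul2l; first by rewrite lee_fin.
apply: ereal_sup_ubound. by exists X.
Qed.

Lemma cabs_lip {R : realType} (a b : CC R) : `|cabs a - cabs b| <= cabs (a - b).
Proof.
have H1 := cabsD (a - b) b. have H2 := cabsD (b - a) a.
rewrite subrK in H1. rewrite subrK in H2.
have : cabs (b - a) = cabs (a - b) by rewrite -cabsN opprB.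
move=> E. rewrite E in H2.
rewrite ler_norml. apply/andP; split; lra.
Qed.

Lemma bound_on_compact {R : realType} {G : topologicalType} {L : G -> R} {K : set G} :
  continuous L -> compact K -> exists M, forall g, K g -> L g <= M.
Proof.
move=> Lc cK.
have cLK := continuous_compact (continuous_subspaceT Lc) cK.
have := compact_bounded cLK. move=> [M0 [_ HM0]].
exists (M0 + 1) => g Kg.
have HM1 : M0 < M0 + 1 by rewrite ltrDl.
have := HM0 (M0 + 1) HM1. move=> /(_ (L g)) H.
apply: le_trans (ler_norm _) _. apply: H. by exists g.
Qed.

Lemma sqrte_le {R : realType} (x : \bar R) (c : R) : 0 <= c ->
  (sqrte x <= c%:E)%E = (x <= (c ^+ 2)%:E)%E.
Proof.
move=> c0. have -> : (c%:E = sqrte ((c ^+ 2)%:E))%E by rewrite /= sqrtr_sqr ger0_norm.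
by rewrite lee_sqrt // lee_fin sqr_ge0.
Qed.


Definition ptop (T : topologicalType) (x : T) : Type := T.
HB.instance Definition _ (T : topologicalType) (x : T) := Topological.on (@ptop T x).
HB.instance Definition _ (T : topologicalType) (x : T) := isPointed.Build (@ptop T x) x.

Section Twist.
Variables (R : realType) (G S : topologicalType) (GG : gpd G) (SS : gpd S)
  (pi : S -> G) (iota : CC R -> G -> S).
Hypothesis Htw : is_twist GG SS pi iota.

Lemma pi_surj g : exists s, pi s = g.
Proof. exact: tw_pi_surj Htw g. Qed.

Lemma fiber_cabs f : is_section GG SS pi iota f ->
  forall s t, pi s = pi t -> cabs (f s) = cabs (f t).
Proof.
move=> Hf s t Hst.
have [U [sec [zeta [[oU Ug] _ secE _ Hz]]]] := tw_loc_triv Htw (pi s).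
suff key : forall t, pi t = pi s -> cabs (f t) = cabs (f (sec (pi s))).
  by rewrite key // key.
move=> u Hu. have Uu : U (pi u) by rewrite Hu.
have [cz Eu] := Hz u Uu.
rewrite Eu Hu.
have := Hf (zeta u) (sec (pi s)) cz. rewrite secE // => ->.
exact: cabs_conjM.
Qed.

Lemma sabsE f : is_section GG SS pi iota f ->
  forall s, sabs pi f (pi s) = cabs (f s).
Proof.
move=> Hf s. rewrite /sabs.
have -> : [set r | exists t, pi t = pi s /\ r = cabs (f t)] = [set cabs (f s)].
  apply/seteqP; split => r /=.
    by move=> [t [Ht ->]]; exact: (@fiber_cabs f Hf t s Ht).

  by move=> ->; exists s.
exact: sup1.
Qed.

Lemma section_sub f h : is_section GG SS pi iota f -> is_section GG SS pi iota h ->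
  is_section GG SS pi iota (fun s => f s - h s).
Proof. by move=> Hf Hh z s cz; rewrite Hf // Hh // mulrBr. Qed.
Arguments section_sub {f h}.

Hypothesis HGG : is_groupoid GG.

Lemma term_ge (L : G -> R) p k : (forall g, 0 <= L g) -> is_section GG SS pi iota k ->
  forall s (F : set G), F (pi s) ->
  ((cabs (k s))%:E <= sqrte (\esum_(g in F) ((sabs pi k g) ^+ 2 * (1 + L g) ^+ (2 * p))%:E))%E.
Proof.
move=> L0 Hk s F Fs.
have -> : ((cabs (k s))%:E = sqrte (((cabs (k s)) ^+ 2)%:E))%E.
  by rewrite /= sqrtr_sqr ger0_norm // cabs_ge0.
rewrite lee_sqrt; last first.
  by apply: esum_ge0 => g _; rewrite lee_fin mulr_ge0 // ?sqr_ge0 // exprn_ge0 // addr_ge0.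
apply: esum_ge. exists [set pi s].
  by split; [exact: finite_set1 | move=> g /= ->].
rewrite fsbig_set1 lee_fin (@sabsE k Hk).
apply: ler_peMr; first exact: sqr_ge0.
by apply: exprn_ege1; rewrite lerDl.
Qed.

Lemma norm_ge (L : G -> R) p k : (forall g, 0 <= L g) -> is_section GG SS pi iota k ->
  forall s, ((cabs (k s))%:E <= norm2pL GG pi L p k)%E.
Proof.
move=> L0 Hk s. rewrite /norm2pL le_max; apply/orP; left.
apply: le_trans (ereal_sup_ubound _); first last.
  exists (g_src GG (pi s)); first exact: gp_src_unit.
  reflexivity.
exact: term_ge.
Qed.

Lemma closure_cont (L : G -> R) p f U : (forall g, 0 <= L g) ->
  is_section GG SS pi iota f -> in_closure_Cc GG SS pi iota L p U f -> continuous f.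
Proof.
move=> L0 Hf Hcl s0. apply: cont_eps => e e0.
have e3 : 0 < e / 3 by rewrite divr_gt0.
have [h [[Hh hc _] Hn]] := Hcl (e / 3) e3.
have B : forall s, cabs (f s - h s) < e / 3.
  move=> s. rewrite -lte_fin. apply: le_lt_trans Hn.
  have := @norm_ge L p (fun s => f s - h s) L0 (section_sub Hf Hh) s. by [].
near=> s.
have Hs : cabs (h s0 - h s) < e / 3 by near: s; exact: (eps_cont (hc s0) _ e3).
have -> : f s0 - f s = (f s0 - h s0) + ((h s0 - h s) + - (f s - h s)) by ring.
apply: le_lt_trans (cabsD _ _) _.
have := cabsD (h s0 - h s) (- (f s - h s)). rewrite cabsN.
have := B s0. have := B s. lra.
Unshelve. all: by end_near.
Qed.

Lemma open_lt (f : S -> CC R) (d : R) : continuous f -> open [set s | cabs (f s) < d].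
Proof.
move=> fc. rewrite openE => s0 /= H0. rewrite /interior.
have e0 : 0 < d - cabs (f s0) by rewrite subr_gt0.
near=> s.
have Hs : cabs (f s0 - f s) < d - cabs (f s0) by near: s; exact: (eps_cont (fc s0) _ e0).
have H1 := cabs_lip (f s0) (f s).
have H2 : -(cabs (f s0) - cabs (f s)) <= `|cabs (f s0) - cabs (f s)| by rewrite -normrN ler_norm.
rewrite /=. lra.
Unshelve. all: by end_near.
Qed.

Definition Cset (f : S -> CC R) (d : R) := ~` (pi @` [set s | cabs (f s) < d]).

Lemma closed_Cset f d : continuous f -> closed (Cset f d).
Proof. move=> fc. rewrite /Cset closedC. apply: (tw_pi_open Htw). exact: open_lt. Qed.

Lemma Cset_ge f d s : Cset f d (pi s) -> d <= cabs (f s).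
Proof. move=> H. rewrite leNgt; apply/negP => H'. apply: H. by exists s. Qed.

Lemma notCset_lt f d s : is_section GG SS pi iota f -> ~ Cset f d (pi s) -> cabs (f s) < d.
Proof.
move=> Hf /contrapT [t Ht Et]. by rewrite (@fiber_cabs f Hf s t (esym Et)).
Qed.

Lemma Cset_supp f d g : 0 < d -> Cset f d g -> supp pi f g.
Proof.
move=> d0. have [s <-] := pi_surj g. move=> /Cset_ge H. exists s; split => //.
apply/eqP => E. rewrite E cabs0 in H. lra.
Qed.

Lemma C0_restrict f U : C0_on GG SS pi iota setT f -> supp pi f = U ->
  C0_on GG SS pi iota U f.
Proof.
move=> [Hf _ fc Hv] Hsupp.
have fc' : continuous f by apply/continuous_subspace_setT; rewrite preimage_setT in fc.
split => //.
- move=> s Us. case: (eqVneq (f s) 0) => // fs0. exfalso; apply: Us; rewrite -Hsupp; by exists s.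
- exact: continuous_subspaceT.
- move=> e e0. have [K [cK _ HK]] := Hv e e0. exists (K `&` Cset f e). split.
  + apply: compact_closedI => //; exact: closed_Cset.
  + move=> g [_ Cg]. rewrite -Hsupp. exact: Cset_supp Cg.
  + move=> s Hs. case: (pselect (K (pi s))) => Ks; last exact: HK.
    apply: notCset_lt => // Cs; apply: Hs; by split.
Qed.

Lemma inv_inj k1 k2 : g_inv GG k1 = g_inv GG k2 -> k1 = k2.
Proof.
move=> E.
have s12 : g_src GG k1 = g_src GG k2 by rewrite -(gp_rng_inv HGG k1) E gp_rng_inv.
have r12 : g_rng GG k1 = g_rng GG k2 by rewrite -(gp_src_inv HGG k1) E gp_src_inv.
rewrite -[k1](gp_mulg1 HGG) s12 -(gp_mulVg HGG k2) -(gp_mulA HGG).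
- by rewrite -E (gp_mulgV HGG) r12 (gp_mul1g HGG).
- by rewrite /composable (gp_rng_inv HGG).
- by rewrite /composable (gp_src_inv HGG).
Qed.

Lemma bisection : lch_etale_groupoid GG -> forall g, exists V : set G,
  [/\ open V, V g, (forall a b, V a -> V b -> g_src GG a = g_src GG b -> a = b) &
      (forall a b, V a -> V b -> g_rng GG a = g_rng GG b -> a = b)].
Proof.
move=> [[_ _ invc] _ _ lh] g.
have [V1 [oV1 V1g inj1 _ _]] := lh g.
have [V2 [oV2 V2g inj2 _ _]] := lh (g_inv GG g).
exists (V1 `&` (g_inv GG @^-1` V2)). split.
- apply: openI => //. apply: open_comp => // x _; exact: invc.
- by split.
- move=> a b [_ Va] [_ Vb] E. apply: inv_inj. apply: inj2; rewrite ?inE //.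
  by rewrite !(gp_rng_inv HGG).
- move=> a b [Va _] [Vb _] E. by apply: inj1; rewrite ?inE.
Qed.

Lemma finite_bisections (K : set G) : lch_etale_groupoid GG -> compact K ->
  exists (D : seq G) (V : G -> set G), [/\ (forall g, K g -> exists2 i, i \in D & V i g),
    (forall i a b, V i a -> V i b -> g_src GG a = g_src GG b -> a = b) &
    (forall i a b, V i a -> V i b -> g_rng GG a = g_rng GG b -> a = b)].
Proof.
move=> Het cK.
have [V HV] := choice (bisection Het).
have oV : forall i, K i -> open (V i) by move=> i _; have [] := HV i.
have cov : K `<=` cover K V by move=> g Kg; exists g => //; have [] := HV g.
case: (pselect (K !=set0)) => [[k0 Kk0]|K0]; last first.
  exists [::], V; split.
  - by move=> g Kg; exfalso; apply: K0; exists g.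
  - by move=> i a b; have [_ _ H _] := HV i; exact: H.
  - by move=> i a b; have [_ _ _ H] := HV i; exact: H.
have E := @compact_cover (ptop G k0).
have cK' : @cover_compact (ptop G k0) K by rewrite -E.
have [D' _ HD'] := cK' G K V oV cov.
exists (finmap.enum_fset D'), V. split.
- move=> g /HD' [i /= Di Vi]. by exists i.
- by move=> i a b; have [_ _ H _] := HV i; exact: H.
- by move=> i a b; have [_ _ _ H] := HV i; exact: H.
Qed.

Lemma esum_count (F : set G) (D : seq G) (V : G -> set G) (c : R) :
  0 <= c -> (forall i a b, F a -> F b -> V i a -> V i b -> a = b) ->
  (\esum_(g in F) (\sum_(i <- D) (if g \in V i then c%:E else 0)) <= (\sum_(i <- D) c)%:E)%E.
Proof.
move=> c0 HV. rewrite esum_sum; last by move=> g i _ _; case: ifP => _ //; rewrite lee_fin.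
rewrite -sumEFin. apply: lee_sum => i _. rewrite -esum_mkcondr.
case: (pselect ((F `&` V i) !=set0)) => [[g0 [Fg0 Vg0]] | H].
  have -> : F `&` V i = [set g0].
    apply/seteqP; split => g /=; last by move=> ->.
    by move=> [Fg Vg]; apply: (HV i).
  by rewrite esum_set1 // lee_fin.
have -> : F `&` V i = set0.
  by apply/seteqP; split => g // Hg; exfalso; apply: H; exists g.
by rewrite esum_set0 lee_fin.
Qed.

Lemma le_indic (D : seq G) (V : G -> set G) (c : R) g :
  0 <= c -> (exists2 i, i \in D & V i g) ->
  (c%:E <= \sum_(i <- D) (if g \in V i then c%:E else 0))%E.
Proof.
move=> c0 [i Di Vig]. rewrite (big_rem i) //= ifT; last by rewrite inE.
rewrite leeDl //. apply: sume_ge0 => j _. case: ifP => _ //; by rewrite lee_fin.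
Qed.

Variable (L : G -> R).
Hypothesis Het : lch_etale_groupoid GG.
Hypothesis HL : length_function GG L.
Hypothesis Lc : continuous L.

Lemma L0 : forall g, 0 <= L g.
Proof. by case: HL. Qed.

Lemma w_ge1 p g : 1 <= (1 + L g) ^+ (2 * p).
Proof. by apply: exprn_ege1; rewrite lerDl L0. Qed.

Lemma fiber_le_norm p k (x : G) : g_unit GG x ->
  (sqrte (\esum_(g in [set g | g_src GG g = x])
                 ((sabs pi k g) ^+ 2 * (1 + L g) ^+ (2 * p))%:E) <= norm2pL GG pi L p k)%E /\
  (sqrte (\esum_(g in [set g | g_rng GG g = x])
                 ((sabs pi k g) ^+ 2 * (1 + L g) ^+ (2 * p))%:E) <= norm2pL GG pi L p k)%E.
Proof.
move=> ux. rewrite /norm2pL. split; rewrite le_max; apply/orP; [left|right];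
  apply: ereal_sup_ubound; by exists x.
Qed.

Lemma approx p f U : is_section GG SS pi iota f ->
  in_closure_Cc GG SS pi iota L p setT f -> supp pi f = U ->
  in_closure_Cc GG SS pi iota L p U f.
Proof.
move=> Hf Hcl Hsupp e e0.
have fc : continuous f := @closure_cont L p f setT L0 Hf Hcl.
pose eps := e / 8.
have eps0 : 0 < eps by rewrite divr_gt0.
have [h [[Hh hc [K [cK _ HK]]] Hn]] := Hcl eps eps0.
have [M HM] := bound_on_compact Lc cK.
pose M' := Num.max 0 M.
have M'0 : 0 <= M' by rewrite le_max lexx.
have HM' : forall g, K g -> L g <= M' by move=> g Kg; rewrite le_max HM ?orbT.
pose Cw := (1 + M') ^+ (2 * p).
have HCw : forall g, K g -> (1 + L g) ^+ (2 * p) <= Cw.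
  move=> g Kg. apply: lerXn2r; rewrite ?inE ?nnegrE.
  - by rewrite addr_ge0 // L0.
  - by rewrite addr_ge0.
  - by rewrite lerD2l HM'.
have Cw1 : 1 <= Cw by apply: exprn_ege1; rewrite lerDl.
have [D [V [covD injs injr]]] := @finite_bisections K Het cK.
pose Nd := \sum_(i <- D) (1 : R).
have Nd0 : 0 <= Nd by apply: sumr_ge0.
have Y0 : 0 < 64 * Cw * (Nd + 1).
  apply: mulr_gt0; first by apply: mulr_gt0 => //; lra.
  lra.
pose d := Num.min 1 (e ^+ 2 / (64 * Cw * (Nd + 1))).
have d0 : 0 < d.
  rewrite lt_min ltr01 /=. apply: divr_gt0 => //. exact: exprn_gt0.
have d1 : d <= 1 by rewrite ge_min lexx.
have dY : d * (64 * Cw * (Nd + 1)) <= e ^+ 2.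
  have : d <= e ^+ 2 / (64 * Cw * (Nd + 1)) by rewrite ge_min lexx orbT.
  by rewrite ler_pdivlMr.
pose c := 8 * d ^+ 2 * Cw.
have c0 : 0 <= c by rewrite /c; apply: mulr_ge0; [apply: mulr_ge0; [lra|exact: sqr_ge0]|lra].
have cbound : c * Nd <= e ^+ 2 / 8.
  rewrite /c. have dd : d ^+ 2 <= d by rewrite expr2 ler_piMr //; lra.
  have CN : 0 <= Cw * Nd by apply: mulr_ge0 => //; lra.
  have h1 : d ^+ 2 * (Cw * Nd) <= d * (Cw * Nd) by apply: ler_wpM2r.
  have h2 : d * (Cw * Nd) <= d * (Cw * (Nd + 1)).
    apply: ler_wpM2l; first exact: ltW.
    apply: ler_wpM2l; lra.
  lra.
pose phi s := clamp01 (cabs (f s) / d - 1).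
pose h' s := h s * ((phi s)%:C)%C.
have Hh' : is_section GG SS pi iota h'.
  move=> z s cz. rewrite /h' /phi Hh // Hf // cabs_conjM //. by rewrite mulrA.
have phic : continuous (fun s => ((phi s)%:C)%C : CC R).
  move=> s0. apply: cont_eps => e' e'0.
  have e'd : 0 < e' * d by rewrite mulr_gt0.
  near=> s.
  have Hs : cabs (f s0 - f s) < e' * d by near: s; exact: (eps_cont (fc s0) _ e'd).
  rewrite -rmorphB cabs_real.
  apply: le_lt_trans (clamp01_lip _ _) _.
  have -> : cabs (f s0) / d - 1 - (cabs (f s) / d - 1) = (cabs (f s0) - cabs (f s)) / d.
    by rewrite mulrBl; ring.
  rewrite normrM [`|d^-1|]ger0_norm ?invr_ge0 ?(ltW d0) //.
  rewrite ltr_pdivrMr //. apply: le_lt_trans (cabs_lip _ _) Hs.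
have h'c : continuous h'.
  move=> s0. exact: cvgM (hc s0) (phic s0).
have Ccon : Cc_on GG SS pi iota U h'.
  split => //. exists (K `&` Cset f d). split.
  - apply: compact_closedI => //; exact: closed_Cset.
  - move=> g [_ Cg]. rewrite -Hsupp. exact: Cset_supp Cg.
  - move=> s Hs. rewrite /h'. case: (pselect (K (pi s))) => Ks; last by rewrite HK // mul0r.
    have : cabs (f s) < d.
      apply: (@notCset_lt f d s Hf) => Cs; apply: Hs; by split.
    move=> fsd. rewrite /phi clamp01_le0 ?mulr0 //.
    rewrite subr_le0 ler_pdivrMr // mul1r. exact: ltW.
exists h'; split => //.
have Hfh := section_sub Hf Hh.
have Hfh' := section_sub Hf Hh'.
pose w g := (1 + L g) ^+ (2 * p).
pose B g := (sabs pi (fun s => f s - h s) g) ^+ 2 * w g.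
pose A g := (sabs pi (fun s => f s - h' s) g) ^+ 2 * w g.
pose Ind g := \sum_(i <- D) (if g \in V i then c%:E else 0%E).
have w1 : forall g, 1 <= w g by move=> g; exact: w_ge1.
have B0 : forall g, 0 <= B g.
  by move=> g; apply: mulr_ge0; [exact: sqr_ge0 | have := w1 g; lra].
have Ind0 : forall g, (0 <= Ind g)%E.
  by move=> g; apply: sume_ge0 => i _; case: ifP => _ //; rewrite lee_fin.
have pw : forall g, ((A g)%:E <= (8 * B g)%:E + Ind g)%E.
  move=> g. have [s <-] := pi_surj g.
  rewrite /A /B (@sabsE _ Hfh') (@sabsE _ Hfh) /=.
  have wge := w1 (pi s).
  have b0 := cabs_ge0 (f s - h s).
  have a0 := cabs_ge0 (f s - h' s).
  have ph0 := clamp01_ge0 (cabs (f s) / d - 1).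
  have ph1 := clamp01_le1 (cabs (f s) / d - 1).
  case: (pselect (K (pi s))) => Ks; last first.
    have ab : cabs (f s - h' s) = cabs (f s - h s) by rewrite /h' !HK // mul0r.
    rewrite ab. apply: le_trans (leeDl _ (Ind0 _)). rewrite lee_fin.
    have := B0 (pi s). rewrite /B (@sabsE _ Hfh) /=. lra.
  have Ic : (c%:E <= Ind (pi s))%E := @le_indic D V c (pi s) c0 (covD _ Ks).
  have key : cabs (f s - h' s) <= cabs (f s - h s) + cabs (h s) * (1 - phi s).
    have -> : f s - h' s = (f s - h s) + h s * (((1 - phi s)%:C)%C).
      rewrite /h' rmorphB rmorph1 /=. ring.
    apply: le_trans (cabsD _ _) _. rewrite cabsM cabs_real ger0_norm //.
    rewrite /phi; lra.
  have hb : cabs (h s) * (1 - phi s) <= 2 * d + cabs (f s - h s).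
    move: ph1. rewrite le_eqVlt => /orP [/eqP E1| lt1].
      rewrite /phi E1 subrr mulr0. lra.
    have fl : cabs (f s) < 2 * d.
      have H4 := clamp01_lt1 _ lt1.
      have : cabs (f s) / d < 2 by lra.
      by rewrite ltr_pdivrMr // mulrC.
    have hs : cabs (h s) <= cabs (f s) + cabs (f s - h s).
      have E2 : h s = f s + - (f s - h s) by rewrite opprB addrC subrK.
      rewrite {1}E2. apply: le_trans (cabsD _ _) _. by rewrite cabsN.
    have : cabs (h s) * (1 - phi s) <= cabs (h s).
      apply: ler_piMr; [exact: cabs_ge0 | rewrite /phi; lra].
    lra.
  have H2 : cabs (f s - h' s) ^+ 2 <= 8 * cabs (f s - h s) ^+ 2 + 8 * d ^+ 2.
    have H3 : cabs (f s - h' s) <= 2 * cabs (f s - h s) + 2 * d by lra.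
    have H4 : cabs (f s - h' s) ^+ 2 <= (2 * cabs (f s - h s) + 2 * d) ^+ 2.
      by rewrite !expr2; apply: ler_pM.
    have H5 := sqr_ge0 (cabs (f s - h s) - d).
    nra.
  have m1 := ler_wpM2r (ltW (lt_le_trans ltr01 wge)) H2.
  have m2 : d ^+ 2 * w (pi s) <= d ^+ 2 * Cw by apply: ler_wpM2l; [exact: sqr_ge0 | exact: HCw].
  apply: le_trans (leeD (lexx _) Ic). rewrite -EFinD lee_fin /c. lra.
have SumD : \sum_(i <- D) c = c * Nd.
  by rewrite /Nd mulr_sumr; apply: eq_bigr => i _; rewrite mulr1.
have e2 : 0 <= e / 2 by apply: divr_ge0; lra.
have fest : forall F : set G, (forall i a b, F a -> F b -> V i a -> V i b -> a = b) ->
    (sqrte (\esum_(g in F) (B g)%:E) <= eps%:E)%E ->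
    (sqrte (\esum_(g in F) (A g)%:E) <= (e / 2)%:E)%E.
  move=> F HF HB. rewrite sqrte_le //. rewrite sqrte_le in HB; last exact: ltW.
  apply: le_trans (le_esum (fun g _ => pw g)) _.
  rewrite esumD; first last.
  - by move=> g _; exact: Ind0.
  - by move=> g _; rewrite lee_fin; apply: mulr_ge0 => //; lra.
  have E8 : \esum_(g in F) (8 * B g)%:E = \esum_(g in F) ((8 : R)%:E * (B g)%:E)%E.
    by apply: eq_esum => g _; rewrite EFinM.
  rewrite E8.
  have c8 : (0 : R) <= 8 by lra.
  have Bp : forall g, (0 <= (B g)%:E)%E by move=> g; rewrite lee_fin.
  apply: le_trans (leeD (@esumZ_le R G F (fun g => (B g)%:E) 8 c8 Bp) (@esum_count F D V c c0 HF)) _.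
  apply: le_trans (leeD (lee_wpmul2l _ HB) (lexx _)) _; first by rewrite lee_fin; lra.
  rewrite -EFinM -EFinD lee_fin SumD /eps. lra.
rewrite /norm2pL. apply: (@le_lt_trans _ _ (e / 2)%:E); last by rewrite lte_fin; lra.
rewrite ge_max; apply/andP; split; apply: ge_ereal_sup => _ [x ux <-]; apply: fest.
- move=> i a b Fa Fb Va Vb; apply: (injs i) => //. by rewrite Fa Fb.
- apply: le_trans (ltW Hn). rewrite /B /w. exact:  (fiber_le_norm p (fun s => f s - h s) x ux).1.
- move=> i a b Fa Fb Va Vb; apply: (injr i) => //. by rewrite Fa Fb.
- apply: le_trans (ltW Hn). rewrite /B /w. exact: (fiber_le_norm p (fun s => f s - h s) x ux).2.
Unshelve. all: by end_near.
Qed.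

End Twist.

Theorem proposition3p8 (R : realType) (G S : topologicalType)
    (GG : gpd G) (SS : gpd S) (pi : S -> G) (iota : CC R -> G -> S)
    (L : G -> R) :
  lch_etale_groupoid GG ->
  is_twist GG SS pi iota ->
  length_function GG L -> continuous L ->
  (forall (p : nat) (f : S -> CC R) (U : set G), (0 < p)%N ->
     H2Lp GG SS pi iota L p f -> open U -> supp pi f = U ->
     in_closure_Cc GG SS pi iota L p U f) /\
  (forall (f : S -> CC R) (U : set G),
     H2L_on GG SS pi iota L setT f -> open U -> supp pi f = U ->
     H2L_on GG SS pi iota L U f).
Proof.
move=> Het Htw HL Lc.
have HGG : is_groupoid GG by case: Het => [[]].
split.
- move=> p f U p0 [Hf Hcl] oU Hs.
  exact: (@approx R G S GG SS pi iota Htw HGG L Het HL Lc p f U Hf Hcl Hs).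
- move=> f U [Hcl HC0] oU Hs. split.
  + move=> p p0. have Hf : is_section GG SS pi iota f by case: HC0.
    exact: (@approx R G S GG SS pi iota Htw HGG L Het HL Lc p f U Hf (Hcl p p0) Hs).
  + exact: (@C0_restrict R G S GG SS pi iota Htw f U HC0 Hs).
Qed.
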